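(* Consider a hyperfractal with $n$ nodes and $d_F>2$. Let $\epsilon>0$ and $H(n)=\left\lceil \frac{\log(n^{1-\epsilon}p/2)}{\log(2/q)}\right\rceil$, and let $n_c$ denote the number of mobile nodes on a street of level $H(n)$. Then the probability that this street is empty, i.e. $\mathbb{P}(n_c=0)$, is smaller than $e^{-(q/2)n^{\epsilon}}$.
   Context: Hyperfractal model: the map is the unit square $[0,1]^2$. For $l\ge 0$ let $\mathcal{X}_l=\{(b2^{-(l+1)},y): b=1,3,\dots,2^{l+1}-1,\ y\in[0,1]\}\cup\{(x,b2^{-(l+1)}): b=1,3,\dots,2^{l+1}-1,\ x\in[0,1]\}$; each such segment is a street of level $l$. Fix $p\in(0,1)$, $q=1-p$. The $n$ mobile nodes form a Poisson point process on $\bigcup_l\mathcal{X}_l$ with total mean $n$ and one-dimensional intensity $\lambda_l=n(p/2)(q/2)^l$ on $\mathcal{X}_l$. The fractal dimension is $d_F=\log(4/q)/\log 2$. *)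

(* Defs.v *)
From HB Require Import structures.
From mathcomp Require Import all_boot all_order all_algebra.
From mathcomp Require Import all_classical all_reals all_analysis.
Set Implicit Arguments. Unset Strict Implicit. Unset Printing Implicit Defensive.
Import Order.TTheory GRing.Theory Num.Theory.
Import numFieldNormedType.Exports.
Local Open Scope classical_set_scope.
Local Open Scope ring_scope.

Section Hyperfractal.
Context {R : realType}.

(* A street: level l, odd index b with b < 2^(l+1), and orientation.
   vertical = true  : the segment {(b 2^-(l+1), y) : y in [0,1]}
   vertical = false : the segment {(x, b 2^-(l+1)) : x in [0,1]} *)
Record street := Street { st_level : nat; st_index : nat; st_vertical : bool }.

Definition street_valid (s : street) : bool :=
  odd (st_index s) && (st_index s < 2 ^ (st_level s).+1)%N.

Definition street_coord (l b : nat) : R := b%:R / (2 ^+ l.+1).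

Definition street_set (s : street) : set (R * R) :=
  if st_vertical s then
    [set z | z.1 = street_coord (st_level s) (st_index s) /\ 0 <= z.2 <= 1]
  else
    [set z | z.2 = street_coord (st_level s) (st_index s) /\ 0 <= z.1 <= 1].

(* one-dimensional intensity on X_l : lambda_l = n (p/2) (q/2)^l, q = 1 - p *)
Definition hf_lambda (n p : R) (l : nat) : R := n * (p / 2) * ((1 - p) / 2) ^+ l.

Definition hf_dim (p : R) : R := ln (4 / (1 - p)) / ln 2.

Definition vert_len (A : set (R * R)) (l b : nat) : \bar R :=
  lebesgue_measure [set y : R | 0 <= y <= 1 /\ A (street_coord l b, y)].
Definition horiz_len (A : set (R * R)) (l b : nat) : \bar R :=
  lebesgue_measure [set x : R | 0 <= x <= 1 /\ A (x, street_coord l b)].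

Definition hf_intensity (n p : R) (A : set (R * R)) : \bar R :=
  (\sum_(0 <= l <oo)
     ((hf_lambda n p l)%:E *
       \sum_(b < 2 ^ l.+1 | odd b) (vert_len A l b + horiz_len A l b)))%E.

Definition pois_pmf (r : R) (k : nat) : R := expR (- r) * r ^+ k / k`!%:R.

Definition ppp_count {T : Type} (X : T -> seq (R * R)) (A : set (R * R)) (w : T)
  : nat := count (fun z => `[< A z >]) (X w).

Definition is_hyperfractal_ppp {d : measure_display} {T : measurableType d}
  (P : probability T R) (n p : R) (X : T -> seq (R * R)) : Prop :=
  [/\ (forall A, measurable A -> forall k : nat,
          measurable [set w | ppp_count X A w = k]),
      (forall A, measurable A -> forall k : nat,
          P [set w | ppp_count X A w = k] = (pois_pmf (fine (hf_intensity n p A)) k)%:E) &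
      (forall (m : nat) (A : 'I_m -> set (R * R)) (k : 'I_m -> nat),
          (forall i, measurable (A i)) ->
          (forall i j, i != j -> A i `&` A j = set0) ->
          P (\bigcap_(i in [set: 'I_m]) [set w | ppp_count X (A i) w = k i])
          = (\prod_(i < m) P [set w | ppp_count X (A i) w = k i])%E)].

End Hyperfractal.

(* Main.v *)
Require Import Defs.
From HB Require Import structures.
From mathcomp Require Import all_boot all_order all_algebra.
From mathcomp Require Import all_classical all_reals all_analysis.
From mathcomp Require Import ring lra.
Import Order.TTheory GRing.Theory Num.Theory.
Local Open Scope classical_set_scope.
Local Open Scope ring_scope.

Lemma num_bound (R : realType) (n : nat) (p eps : R) (L : nat) :
  0 < p < 1 -> (0 < n)%N ->
  (L%:R - 1 : R) < ln (n%:R `^ (1 - eps) * p / 2) / ln (2 / (1 - p)) ->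
  (1 - p) / 2 * n%:R `^ eps < hf_lambda n%:R p L.
Proof.
move=> /andP[p0 p1] n0 hL.
set q := 1 - p; set a := 2 / q.
have q0 : 0 < q by rewrite /q subr_gt0.
have q1 : q < 1 by rewrite /q; lra.
have a1 : 1 < a by rewrite /a ltr_pdivlMr //; lra.
have a0 : 0 < a by lra.
have la0 : 0 < ln a by exact: ln_gt0.
have nR0 : (0 : R) < n%:R by rewrite ltr0n.
set m := n%:R `^ (1 - eps) * p / 2.
have m0 : 0 < m by rewrite /m !mulr_gt0 ?invr_gt0 ?powR_gt0 //.
have h1 : (L%:R - 1) * ln a < ln m by rewrite -ltr_pdivlMr.
have h2 : L%:R * ln a < ln (m * a).
  rewrite lnM ?posrE //; lra.
have h3 : a ^+ L < m * a.
  have -> : a ^+ L = expR (L%:R * ln a) by rewrite expRM_natl lnK ?posrE.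
  rewrite -[X in _ < X]lnK ?posrE; last exact: mulr_gt0.
  by rewrite ltr_expR.
have qa : q / 2 * a = 1 by rewrite /a -invf_div mulVf // gt_eqF.
have nn : n%:R `^ eps * n%:R `^ (1 - eps) = n%:R :> R.
  by rewrite -powRD ?subrKC ?powRr1 ?ler0n //; apply/implyP => _; rewrite gt_eqF.
rewrite /hf_lambda -/q.
have -> : (q / 2) ^+ L = (a ^+ L)^-1 by rewrite -exprVn /a invf_div.
have aL0 : 0 < a ^+ L by rewrite exprn_gt0.
rewrite ltr_pdivlMr //.
have : q / 2 * n%:R `^ eps * a ^+ L < q / 2 * n%:R `^ eps * (m * a).
  by rewrite ltr_pM2l // mulr_gt0 ?powR_gt0 // divr_gt0.
suff -> : q / 2 * n%:R `^ eps * (m * a) = n%:R * (p / 2) by [].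
move: nn qa; rewrite /m; clear -p0.
move: (n%:R `^ eps) (n%:R `^ (1 - eps)) (q / 2) a => x y u v nn qa.
have -> : u * x * (y * p / 2 * v) = (u * v) * (x * y) * (p / 2) by ring.
by rewrite qa mul1r nn.
Qed.
Lemma nat_inj_aux (l b l' b' : nat) : (l <= l')%N -> odd b -> odd b' ->
  (b * 2 ^ l'.+1 = b' * 2 ^ l.+1)%N -> l = l' /\ b = b'.
Proof.
move=> ll' ob ob' e.
have e2 : (b * 2 ^ (l' - l) = b')%N.
  apply/eqP; rewrite -(eqn_pmul2r (expn_gt0 2 l.+1)) -e -mulnA -expnD.
  by rewrite addnS subnK.
have : (l' - l = 0)%N.
  apply/eqP; move: ob'; rewrite -e2 oddM oddX /=.
  by case: (l' - l)%N => //= k; rewrite andbF.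
move=> h; have ll : l' = l by apply/eqP; rewrite eqn_leq ll' andbT -subn_eq0 h.
by split => //; rewrite -e2 h muln1.
Qed.

Lemma coord_inj (R : realType) (l b l' b' : nat) : odd b -> odd b' ->
  street_coord l b = street_coord l' b' :> R -> l = l' /\ b = b'.
Proof.
move=> ob ob'; rewrite /street_coord => /eqP.
rewrite eqr_div ?expf_neq0 ?pnatr_eq0 // -!natrX -!natrM eqr_nat => /eqP e.
case: (leqP l l') => h; first exact: nat_inj_aux.
have [] := nat_inj_aux _ _ _ _ (ltnW h) ob' ob (esym e).
by move=> e1; rewrite e1 ltnn in h.
Qed.

Lemma coord01 (R : realType) (l b : nat) : (b < 2 ^ l.+1)%N ->
  0 <= (street_coord l b : R) <= 1.
Proof.
move=> h; rewrite /street_coord divr_ge0 ?exprn_ge0 ?ler0n //=.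
rewrite ler_pdivrMr ?exprn_gt0 // mul1r -natrX ler_nat.
exact: ltnW.
Qed.

Lemma meas01 (R : realType) :
  lebesgue_measure [set y : R | 0 <= y <= 1] = 1%E.
Proof.
have -> : [set y : R | 0 <= y <= 1] = [set` `[0, 1]%R].
  by apply/seteqP; split => y /=; rewrite in_itv.
by rewrite lebesgue_measure_itv /= lte_fin ltr01 /= oppr0 adde0.
Qed.

Lemma len_street (R : realType) (L B : nat) (v : bool) (l b : nat) :
  odd B -> (B < 2 ^ L.+1)%N -> odd b -> (b < 2 ^ l.+1)%N ->
  (vert_len (street_set (Street L B v)) l b
   + horiz_len (street_set (Street L B v)) l b
   = if (l == L) && (b == B) then 1 else 0 :> \bar R)%E.
Proof.
move=> oB hB ob hb.
have cB := @coord01 R _ _ hB; have cb := @coord01 R _ _ hb.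
have hS : [set x : R | 0 <= x <= 1 /\ x = street_coord L B /\ 0 <= (street_coord l b : R) <= 1]
   = [set (street_coord L B : R)].
  apply: (proj2 (seteqP _ _)); split => x /=; first by case=> _ [].
  by move=> ->; split.
have hV : [set y : R | 0 <= y <= 1 /\ (street_coord l b : R) = street_coord L B /\ 0 <= y <= 1]
   = if (l == L) && (b == B) then [set y | 0 <= y <= 1] else set0.
  case: ifP => [/andP[/eqP -> /eqP ->]|hn].
    by apply/seteqP; split => y /=; [case | move=> h; split].
  apply/seteqP; split => y //= [_ [e _]].
  have [e1 e2] := coord_inj _ _ _ _ _ ob oB e.
  by rewrite e1 e2 !eqxx in hn.
case: v; rewrite /vert_len /horiz_len /street_set /=.
  rewrite hS hV lebesgue_measure_set1 adde0.
  by case: ifP; rewrite ?meas01 ?measure0.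
rewrite hS hV lebesgue_measure_set1 add0e.
by case: ifP; rewrite ?meas01 ?measure0.
Qed.

Lemma intensity_street (R : realType) (n p : R) (L B : nat) (v : bool) :
  0 <= hf_lambda n p L -> odd B -> (B < 2 ^ L.+1)%N ->
  hf_intensity n p (street_set (Street L B v)) = (hf_lambda n p L)%:E.
Proof.
move=> lam0 oB hB.
have inner : forall l : nat, (\sum_(b < 2 ^ l.+1 | odd b)
    (vert_len (R:=R) (street_set (Street L B v)) l b
     + horiz_len (R:=R) (street_set (Street L B v)) l b))%E
    = if l == L then 1%E else 0%E.
  move=> l.
  rewrite (eq_bigr (fun b : 'I_(2 ^ l.+1) => if (l == L) && (val b == B) then 1%E else 0%E)); last first.
    by move=> b ob; rewrite len_street.
  case: eqP => [el|hl].
    subst l.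
    rewrite (bigD1 (Ordinal hB)) //= eqxx big1 ?adde0 // => i /andP[_ hi].
    case: eqP => // e; move: hi; suff -> : i = Ordinal hB by rewrite eqxx.
    exact: val_inj.
  by rewrite big1 // => i _; case: eqP.
rewrite /hf_intensity (eq_eseriesr (g := fun l => if l == L then (hf_lambda n p L)%:E else 0%E)); last first.
  by move=> l _; rewrite inner; case: eqP => [->|_]; rewrite ?mule1 ?mule0.
rewrite (nneseries_split 0 L.+1); last by move=> k _; case: eqP => _; rewrite ?lee_fin.
rewrite eseries0 ?adde0; last by move=> i hi _; case: eqP => // e; rewrite e ltnn in hi.
by rewrite -big_mkcond big_nat1_eq /= add0n ltnSn.
Qed.

Theorem lemma5 (R : realType) (d : measure_display) (T : measurableType d)
  (P : probability T R) (n : nat) (p eps : R) (X : T -> seq (R * R)) :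
  0 < p < 1 -> (0 < n)%N ->
  is_hyperfractal_ppp P n%:R p X ->
  2 < hf_dim p ->
  0 < eps ->
  let H : int := Num.ceil (ln (n%:R `^ (1 - eps) * p / 2) / ln (2 / (1 - p))) in
  0 <= H ->
  forall s : street, street_valid s -> (st_level s)%:Z = H ->
  (P [set w | ppp_count X (street_set s) w = 0%N]
    < (expR (- ((1 - p) / 2 * n%:R `^ eps)))%:E)%E.
Proof.
move=> hp n0 [_ pm _] _ eps0 H _ [L B v] /andP[/= oB hB] /= hL.
have hnum := @num_bound R n p eps L hp n0.
have lam0 : 0 <= hf_lambda (n%:R : R) p L.
  case/andP: hp => p0 p1.
  rewrite /hf_lambda !mulr_ge0 ?exprn_ge0 ?divr_ge0 ?ler0n //; lra.
have ms : measurable (street_set (R:=R) (Street L B v)).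
  rewrite /street_set; case: v => /=.
    have -> : [set z : R * R | z.1 = street_coord L B /\ 0 <= z.2 <= 1]
      = [set (street_coord L B : R)] `*` [set` `[0%R, 1%R]].
      by apply/seteqP; split => -[x y] /=; rewrite in_itv.
    by apply: measurableX; [exact: measurable_set1 | exact: measurable_itv].
  have -> : [set z : R * R | z.2 = street_coord L B /\ 0 <= z.1 <= 1]
    = [set` `[0%R, 1%R]] `*` [set (street_coord L B : R)].
    by apply/seteqP; split => -[x y] /=; rewrite in_itv /= => -[].
  by apply: measurableX; [exact: measurable_itv | exact: measurable_set1].
rewrite pm // intensity_street //= /pois_pmf expr0 mulr1 divr1 lte_fin ltr_expR ltrN2.
apply: hnum.
have := ceilB1_lt (ln (n%:R `^ (1 - eps) * p / 2) / ln (2 / (1 - p))).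
by rewrite -/H -hL intrB.
Qed.
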